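(* Let $m\ge3$ and $\Omega=\{B\subset\mathcal M:1\le|B|\le m-2\}$. The singleton partition $\mathcal S$ is (a) a minimizer of $\Delta$ (i.e. $\Delta(\mathcal S)=\mathbf I(X_{\mathcal M})$) if and only if $\Delta(\mathcal S)\le\Delta(\mathcal P_B)$ for all $B\in\Omega$; (b) the unique minimizer of $\Delta$ if and only if $\Delta(\mathcal S)<\Delta(\mathcal P_B)$ for all $B\in\Omega$.
   Context: Let $\mathcal M=\{1,\dots,m\}$, and let $X_{\mathcal M}$ be jointly distributed finite-valued random variables, with $X_A=(X_i:i\in A)$. For a partition $\mathcal P$ of $\mathcal M$ with $|\mathcal P|\ge2$, $\Delta(\mathcal P)=\frac1{|\mathcal P|-1}[\sum_{A\in\mathcal P}H(X_A)-H(X_{\mathcal M})]$, and $\mathbf I(X_{\mathcal M})=\min_{\mathcal P}\Delta(\mathcal P)$ over all such partitions. $\mathcal S=\{\{1\},\dots,\{m\}\}$. For a nonempty $B=\{b_1,\dots,b_{|B|}\}\subsetneq\mathcal M$, $\mathcal P_B=\{B^c,\{b_1\},\dots,\{b_{|B|}\}\}$. *)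

(* Defs.v *)
From HB Require Import structures.
From mathcomp Require Import all_boot.
From Stdlib Require Import Reals.

Set Implicit Arguments.
Unset Strict Implicit.
Unset Printing Implicit Defensive.

Lemma Rplus_assoc' : associative Rplus.
Proof. by move=> x y z; rewrite Rplus_assoc. Qed.
HB.instance Definition _ := Monoid.isComLaw.Build R 0%R Rplus
  Rplus_assoc' Rplus_comm Rplus_0_l.

Section Entropy.
Variables (m : nat) (V : finType).
(* An outcome is the joint value (x_1,...,x_m) of X_M; X_i w = w i. *)
Local Notation Omega0 := {ffun 'I_m -> V}.
Variable p : Omega0 -> R.

Definition is_pmf : Prop :=
  (forall w, (0 <= p w)%R) /\ (\big[Rplus/0%R]_(w : Omega0) p w) = 1%R.

Definition probXA (A : {set 'I_m}) (w : Omega0) : R :=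
  \big[Rplus/0%R]_(w' : Omega0 | [forall i in A, w' i == w i]) p w'.

(* Shannon entropy H(X_A) = E[-log P(X_A)] (natural log; base is irrelevant
   for the statement). Terms with p w = 0 vanish, matching 0 log 0 = 0. *)
Definition Hent (A : {set 'I_m}) : R :=
  (- \big[Rplus/0%R]_(w : Omega0) (p w * ln (probXA A w)))%R.

Definition admissible (P : {set {set 'I_m}}) : bool :=
  partition P [set: 'I_m] && (2 <= #|P|)%N.

Definition Delta_part (P : {set {set 'I_m}}) : R :=
  ((\big[Rplus/0%R]_(A in P) Hent A) - Hent [set: 'I_m]) / INR (#|P| - 1).

Definition minimizer (P : {set {set 'I_m}}) : Prop :=
  admissible P /\ forall Q, admissible Q -> (Delta_part P <= Delta_part Q)%R.

Definition unique_minimizer (P : {set {set 'I_m}}) : Prop :=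
  minimizer P /\ forall Q, minimizer Q -> Q = P.

Definition Sing : {set {set 'I_m}} := [set [set i] | i : 'I_m].

Definition PB (B : {set 'I_m}) : {set {set 'I_m}} :=
  ~: B |: [set [set b] | b in B].

Definition inOmega (B : {set 'I_m}) : bool :=
  (1 <= #|B| <= m - 2)%N.

End Entropy.

(* Main.v *)
Require Import Defs.
From HB Require Import structures.
From mathcomp Require Import all_boot zify.
From Stdlib Require Import Reals Lra Psatz.
Section S.
Variable m : nat.
Implicit Types (P : {set {set 'I_m}}) (B C : {set 'I_m}).

Lemma set1_neq0 (i : 'I_m) : [set i] != set0.
Proof. by apply/set0Pn; exists i; rewrite inE. Qed.

Lemma Sing_card : #|Sing m| = m.
Proof. by rewrite card_imset ?card_ord //; apply: set1_inj. Qed.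

Lemma Sing_partition : partition (Sing m) [set: 'I_m].
Proof.
apply/and3P; split.
- apply/eqP/setP => x; rewrite inE; apply/bigcupP; exists [set x]; last by rewrite inE.
  by apply/imsetP; exists x.
- apply/trivIsetP => A1 A2 /imsetP[a _ ->] /imsetP[b _ ->] hne.
  rewrite disjoints1 inE; apply: contra hne => /eqP->; by [].
- apply/imsetP => -[a _ /eqP]; by rewrite eq_sym (negbTE (set1_neq0 a)).
Qed.

Lemma PB_notin B : ~: B \notin [set [set b] | b in B].
Proof.
apply/imsetP => -[b hb] /setP /(_ b); by rewrite !inE hb eqxx.
Qed.

Lemma PB_card B : #|PB B| = (#|B| + 1)%N.
Proof. rewrite /PB cardsU1 PB_notin card_imset; last exact: set1_inj. by rewrite addnC. Qed.

Lemma PB_partition B : (2 <= #|~: B|)%N -> partition (PB B) [set: 'I_m].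
Proof.
move=> h2; apply/and3P; split.
- apply/eqP/setP => x; rewrite inE; apply/bigcupP.
  case hx: (x \in B).
  + exists [set x]; last by rewrite inE.
    by rewrite /PB !inE; apply/orP; right; apply/imsetP; exists x.
  + exists (~: B); first by rewrite /PB !inE eqxx.
    by rewrite inE hx.
- apply/trivIsetP => A1 A2; rewrite /PB !inE.
  move=> /orP[/eqP->|/imsetP[a ha ->]] /orP[/eqP->|/imsetP[b hb ->]] hne.
  + by rewrite eqxx in hne.
  + by rewrite disjoint_sym disjoints1 inE hb.
  + by rewrite disjoints1 inE ha.
  + rewrite disjoints1 inE; apply: contra hne => /eqP->; by [].
- rewrite /PB !inE negb_or; apply/andP; split.
  + apply/eqP => e; move: h2; by rewrite -e cards0.
  + apply/imsetP => -[a _ /eqP]; by rewrite eq_sym (negbTE (set1_neq0 a)).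
Qed.
End S.

Lemma INR_addn a b : INR (a + b)%N = (INR a + INR b)%R. Proof. exact: plus_INR. Qed.

Section R.
Variable m : nat.
Variable h : {set 'I_m} -> R.
Implicit Types (P : {set {set 'I_m}}) (B C : {set 'I_m}).

Definition sC C := \big[Rplus/0%R]_(i in C) h [set i].
Definition s := \big[Rplus/0%R]_(i : 'I_m) h [set i].
Definition D P := ((\big[Rplus/0%R]_(A in P) h A - h [set: 'I_m]) / INR (#|P| - 1))%R.

Lemma sum_Sing : \big[Rplus/0%R]_(A in Sing m) h A = s.
Proof. rewrite /Sing big_imset; last by move=> x y _ _; apply: set1_inj. by apply: eq_bigl. Qed.

Lemma sum_PB B : \big[Rplus/0%R]_(A in PB B) h A = (h (~: B) + sC B)%R.
Proof.
rewrite /PB big_setU1 ?PB_notin //= big_imset //; by move=> x y _ _; apply: set1_inj.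
Qed.

Lemma s_split C : s = (sC C + sC (~: C))%R.
Proof.
rewrite /s (bigID (mem C)) /=; congr Rplus; apply: eq_bigl => i; by rewrite ?inE.
Qed.

Lemma sum_part P : partition P [set: 'I_m] ->
  \big[Rplus/0%R]_(A in P) sC A = s.
Proof.
case/and3P => /eqP hc ht _; rewrite /sC -big_trivIset // hc; apply: eq_bigl => i; by rewrite inE.
Qed.

Lemma sum_card P : partition P [set: 'I_m] ->
  \big[Rplus/0%R]_(A in P) INR #|A| = INR m.
Proof.
move=> hp; rewrite -(big_morph INR INR_addn (erefl (INR 0))) -(card_partition hp).
by rewrite cardsT card_ord.
Qed.

Lemma sum_one P : \big[Rplus/0%R]_(A in P) 1%R = INR #|P|.
Proof.
rewrite -sum1_card (big_morph INR INR_addn (erefl (INR 0))); by apply: eq_bigr.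
Qed.

Lemma sum_sub (T : finType) (A : {pred T}) (f g : T -> R) :
  \big[Rplus/0%R]_(i in A) (f i - g i)%R =
  (\big[Rplus/0%R]_(i in A) f i - \big[Rplus/0%R]_(i in A) g i)%R.
Proof.
rewrite /Rminus big_split /=; congr Rplus.
by rewrite (big_morph Ropp Ropp_plus_distr Ropp_0).
Qed.

Lemma sum_scal (T : finType) (A : {pred T}) (c : R) (f : T -> R) :
  \big[Rplus/0%R]_(i in A) (c * f i)%R = (c * \big[Rplus/0%R]_(i in A) f i)%R.
Proof. by rewrite (big_morph (fun x => c * x)%R (Rmult_plus_distr_l c) (Rmult_0_r c)). Qed.

Lemma sum_le (T : finType) (A : {pred T}) (f g : T -> R) :
  (forall i, i \in A -> f i <= g i)%R ->
  (\big[Rplus/0%R]_(i in A) f i <= \big[Rplus/0%R]_(i in A) g i)%R.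
Proof.
move=> H; apply: (big_ind2 (fun x y => x <= y)%R); first lra.
- move=> *; lra.
- exact: H.
Qed.

Lemma sum_lt (T : finType) (A : {pred T}) (f g : T -> R) (i0 : T) :
  i0 \in A -> (f i0 < g i0)%R ->
  (forall i, i \in A -> f i <= g i)%R ->
  (\big[Rplus/0%R]_(i in A) f i < \big[Rplus/0%R]_(i in A) g i)%R.
Proof.
move=> hi0 hlt H; rewrite (bigD1 i0) //= [X in (_ < X)%R](bigD1 i0) //=.
have : (\big[Rplus/0%R]_(i in A | i != i0) f i <= \big[Rplus/0%R]_(i in A | i != i0) g i)%R.
  apply: (big_ind2 (fun x y => x <= y)%R); first lra.
  - move=> *; lra.
  - by move=> i /andP[hi _]; apply: H.
lra.
Qed.


Lemma INR_sub1 n : (1 <= n)%N -> INR (n - 1) = (INR n - 1)%R.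
Proof. move=> hn; have e : n = ((n - 1) + 1)%N by lia. rewrite {2}e INR_addn /=; lra. Qed.

Lemma le_div x y a : (0 < a)%R -> (x * a <= y)%R -> (x <= y / a)%R.
Proof.
move=> ha hx; have -> : x = (x * a * / a)%R by field; lra.
apply: Rmult_le_compat_r => //; left; exact: Rinv_0_lt_compat.
Qed.

Lemma lt_div x y a : (0 < a)%R -> (x * a < y)%R -> (x < y / a)%R.
Proof.
move=> ha hx; have -> : x = (x * a * / a)%R by field; lra.
apply: Rmult_lt_compat_r => //; exact: Rinv_0_lt_compat.
Qed.

Lemma div_mul y a : (0 < a)%R -> (y / a * a = y)%R.
Proof. move=> ha; field; lra. Qed.

Lemma DSing (hm : (3 <= m)%N) : (D (Sing m) * (INR m - 1) = s - h [set: 'I_m])%R.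
Proof.
rewrite /D sum_Sing Sing_card -INR_sub1; last by lia.
apply: div_mul; apply: lt_0_INR; apply/ltP; lia.
Qed.

Lemma core C : (2 <= #|C|)%N -> C != [set: 'I_m] ->
  [/\ inOmega (~: C),
      (D (PB (~: C)) * (INR m - INR #|C|) = h C + sC (~: C) - h [set: 'I_m])%R
    & (0 < INR m - INR #|C|)%R].
Proof.
move=> h2 hT.
have hc := cardsC C; rewrite card_ord in hc.
have hn : ~: C != set0.
  by apply: contra hT => /eqP e; rewrite -[C]setCK e setC0.
have h1 : (0 < #|~: C|)%N by rewrite card_gt0.
have ek : (INR m - INR #|C| = INR #|~: C|)%R.
  have -> : INR m = INR (#|C| + #|~: C|)%N by rewrite hc.
  rewrite INR_addn; lra.
split.
- rewrite /inOmega; apply/andP; split; lia.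
- rewrite ek /D PB_card addnK sum_PB setCK; apply: div_mul.
  apply: lt_0_INR; apply/ltP; lia.
- rewrite ek; apply: lt_0_INR; apply/ltP; lia.
Qed.

Lemma sC_setT : sC [set: 'I_m] = s.
Proof. by apply: eq_bigl => i; rewrite inE. Qed.

Lemma block_le (hm : (3 <= m)%N) C : C != set0 ->
  (forall B, inOmega B -> (D (Sing m) <= D (PB B))%R) ->
  (sC C - h C <= D (Sing m) * (INR #|C| - 1))%R.
Proof.
move=> h0 W; have hD := DSing hm.
case: (boolP (#|C| == 1%N)) => [/cards1P[x ->]|h1].
  by rewrite /sC big_set1 cards1 /=; lra.
case: (boolP (C == [set: 'I_m])) => [/eqP ->|hT].
  by rewrite sC_setT cardsT card_ord; lra.
have h2 : (2 <= #|C|)%N.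
  have : (0 < #|C|)%N by rewrite card_gt0. move: h1 => /eqP; lia.
have [hO he hk] := core C h2 hT.
have hW := W _ hO.
have := Rmult_le_compat_r _ _ _ (Rlt_le _ _ hk) hW; rewrite he.
have := s_split C. nra.
Qed.

Lemma block_lt (hm : (3 <= m)%N) C : (2 <= #|C|)%N -> C != [set: 'I_m] ->
  (forall B, inOmega B -> (D (Sing m) < D (PB B))%R) ->
  (sC C - h C < D (Sing m) * (INR #|C| - 1))%R.
Proof.
move=> h2 hT W; have hD := DSing hm.
have [hO he hk] := core C h2 hT.
have hW := W _ hO.
have := Rmult_lt_compat_r _ _ _ hk hW; rewrite he.
have := s_split C. nra.
Qed.


Lemma sum_bound P : partition P [set: 'I_m] ->
  \big[Rplus/0%R]_(A in P) (sC A - h A)%R = (s - \big[Rplus/0%R]_(A in P) h A)%R /\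
  \big[Rplus/0%R]_(A in P) (D (Sing m) * (INR #|A| - 1))%R = (D (Sing m) * (INR m - INR #|P|))%R.
Proof.
move=> hp; split; first by rewrite sum_sub sum_part.
by rewrite sum_scal sum_sub sum_card // sum_one.
Qed.

Lemma part_ne0 P A : partition P [set: 'I_m] -> A \in P -> A != set0.
Proof. case/and3P => _ _ h0 hA; apply: contraNneq h0 => <-; exact: hA. Qed.

Lemma finish P : admissible P -> forall d : R,
  (D (Sing m) * (INR #|P| - 1) <= d - h [set: 'I_m])%R ->
  d = \big[Rplus/0%R]_(A in P) h A -> (D (Sing m) <= D P)%R.
Proof.
case/andP => _ hk d hd ed; rewrite [D P]/D -ed [INR (#|P| - 1)]INR_sub1; last by lia.
apply: le_div => //; have : (2 <= INR #|P|)%R by apply: (le_INR 2); apply/leP.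
lra.
Qed.

Lemma finish_lt P : admissible P -> forall d : R,
  (D (Sing m) * (INR #|P| - 1) < d - h [set: 'I_m])%R ->
  d = \big[Rplus/0%R]_(A in P) h A -> (D (Sing m) < D P)%R.
Proof.
case/andP => _ hk d hd ed; rewrite [D P]/D -ed [INR (#|P| - 1)]INR_sub1; last by lia.
apply: lt_div => //; have : (2 <= INR #|P|)%R by apply: (le_INR 2); apply/leP.
lra.
Qed.

Lemma main_le (hm : (3 <= m)%N) P : admissible P ->
  (forall B, inOmega B -> (D (Sing m) <= D (PB B))%R) ->
  (D (Sing m) <= D P)%R.
Proof.
move=> ha W; have hp : partition P [set: 'I_m] by case/andP: ha.
have [e1 e2] := sum_bound P hp.
have hs : (\big[Rplus/0%R]_(A in P) (sC A - h A) <=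
           \big[Rplus/0%R]_(A in P) (D (Sing m) * (INR #|A| - 1)))%R.
  apply: sum_le => A hA; apply: block_le => //; exact: part_ne0 hA.
rewrite e1 e2 in hs; have hD := DSing hm.
apply: (finish P ha _ _ (erefl _)); nra.
Qed.

Lemma main_lt (hm : (3 <= m)%N) P A0 : admissible P -> A0 \in P ->
  (2 <= #|A0|)%N -> A0 != [set: 'I_m] ->
  (forall B, inOmega B -> (D (Sing m) < D (PB B))%R) ->
  (D (Sing m) < D P)%R.
Proof.
move=> ha hA0 h2 hT W; have hp : partition P [set: 'I_m] by case/andP: ha.
have [e1 e2] := sum_bound P hp.
have hs : (\big[Rplus/0%R]_(A in P) (sC A - h A) <
           \big[Rplus/0%R]_(A in P) (D (Sing m) * (INR #|A| - 1)))%R.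
  apply: (sum_lt _ _ _ _ A0 hA0); first exact: block_lt.
  move=> A hA; apply: block_le => //; first exact: part_ne0 hA.
  by move=> B hB; apply: Rlt_le; apply: W.
rewrite e1 e2 in hs; have hD := DSing hm.
apply: (finish_lt P ha _ _ (erefl _)); nra.
Qed.

End R.

Section U.
Variable m : nat.
Implicit Types (P : {set {set 'I_m}}) (B C : {set 'I_m}).

Lemma big_block P : admissible P -> P != Sing m ->
  exists2 A, A \in P & ((1 < #|A|)%N && (A != [set: 'I_m])).
Proof.
case/andP => hp hk hne.
case: (boolP [exists A in P, (1 < #|A|)%N && (A != [set: 'I_m])]).
  by case/exists_inP => A hA hh; exists A.
move/exists_inPn => hall; exfalso; move/negP: hne; apply.
have hp' := hp; case/and3P: hp' => /eqP hc ht h0.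
have ne0 A : A \in P -> A != set0 by move=> hA; apply: contraNneq h0 => <-.
have nT : [set: 'I_m] \notin P.
  apply/negP => hT; case/card_gt1P: hk => x [y [hx hy hxy]].
  have [A' hA' hA'T] : exists2 A', A' \in P & A' != [set: 'I_m].
    case: (eqVneq x [set: 'I_m]) => ex; last by exists x.
    by exists y => //; rewrite -ex eq_sym.
  have := trivIsetP ht _ _ hT hA'; rewrite eq_sym hA'T => /(_ isT) /disjoint_setI0.
  rewrite setTI => e; by move: (ne0 _ hA'); rewrite e eqxx.
have sing A : A \in P -> exists x, A = [set x].
  move=> hA; apply/cards1P; have h0A : (0 < #|A|)%N by rewrite card_gt0; apply: ne0.
  have := hall A hA; rewrite negb_and negbK.
  case/orP => [h1|/eqP e]; first lia.
  by move: nT; rewrite -e hA.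
apply/eqP/setP => A; apply/idP/idP.
- by move=> hA; have [x ->] := sing A hA; apply/imsetP; exists x.
- case/imsetP => x _ ->.
  have : x \in cover P by rewrite hc inE.
  case/bigcupP => A' hA' hx; have [y ey] := sing A' hA'.
  by move: hx hA'; rewrite ey inE => /eqP ->.
Qed.

Lemma Sing_adm : (2 <= m)%N -> admissible (Sing m).
Proof. by move=> hm; rewrite /admissible Sing_partition Sing_card. Qed.

Lemma PB_adm B : inOmega B -> admissible (PB B).
Proof.
rewrite /inOmega => /andP[h1 h2].
have hc := cardsC B; rewrite card_ord in hc.
rewrite /admissible PB_partition; last by lia.
by rewrite PB_card addn1 ltnS.
Qed.

Lemma PB_neq B : inOmega B -> PB B != Sing m.
Proof.
rewrite /inOmega => /andP[h1 h2].
have hc := cardsC B; rewrite card_ord in hc.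
apply/negP => /eqP e; have : ~: B \in PB B by rewrite /PB !inE eqxx.
rewrite e => /imsetP[x _ ex]; move: hc; rewrite ex cards1; lia.
Qed.
End U.

Arguments PB_adm {m B}.
Arguments PB_neq {m B}.
Arguments big_block {m P}.

Theorem proposition2 (m : nat) (V : finType) (p : {ffun 'I_m -> V} -> R)
  (hm : (3 <= m)%N) (hp : is_pmf p) :
  (minimizer p (Sing m) <->
     (forall B : {set 'I_m}, inOmega B -> (Delta_part p (Sing m) <= Delta_part p (PB B))%R))
  /\
  (unique_minimizer p (Sing m) <->
     (forall B : {set 'I_m}, inOmega B -> (Delta_part p (Sing m) < Delta_part p (PB B))%R)).
Proof.
have E : forall P, Delta_part p P = D m (Hent p) P by [].
rewrite /unique_minimizer /minimizer !E.
have hS : admissible (Sing m) by apply: Sing_adm; lia.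
have partA : (forall Q, admissible Q -> (D m (Hent p) (Sing m) <= D m (Hent p) Q)%R) <->
    (forall B, inOmega B -> (D m (Hent p) (Sing m) <= D m (Hent p) (PB B))%R).
  split => H.
  - by move=> B hB; apply: H; apply: PB_adm.
  - by move=> Q hQ; apply: main_le.
split.
- split; first by case=> _ /partA.
  by move=> H; split => //; apply/partA.
- split.
  + case=> [[_ Hmin] Huniq] B hB.
    case: (Rle_lt_or_eq_dec _ _ (Hmin _ (PB_adm hB))) => // eq.
    exfalso; move/negP: (PB_neq hB); apply; apply/eqP; apply: Huniq.
    split; first exact: PB_adm.
    by move=> Q hQ; rewrite -eq; apply: Hmin.
  + move=> H.
    have W : forall B, inOmega B -> (D m (Hent p) (Sing m) <= D m (Hent p) (PB B))%R.
      by move=> B hB; apply: Rlt_le; apply: H.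
    split; first by split => //; apply/partA.
    move=> Q [hQ HQ]; apply/eqP; apply/negP => /negP hne.
    have [A hA /andP[h2 hT]] := big_block hQ hne.
    have := @main_lt m (Hent p) hm Q A hQ hA h2 hT H.
    have := HQ _ hS; rewrite !E; lra.
Qed.
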